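(* Let $\kappa<-1$. Let $P_k,P_0\in\bar D$ and $b_k,b_0$ with $\kappa|P_k|<b_k<|P_k|$, $\kappa|P_0|<b_0<|P_0|$, such that $P_k\to P_0$ and $b_k\to b_0$ as $k\to\infty$. If $z_k\in\Gamma(P_k,b_k)$ and $z_k\to z_0$, then $z_0\in\Gamma(P_0,b_0)$, and the normals satisfy $\nu_k(z_k)\to\nu(z_0)$, where $\nu_k(z)=\frac{z}{|z|}-\kappa\frac{P_k-z}{|P_k-z|}$ is the normal to $\Gamma(P_k,b_k)$ at $z$ and $\nu(z)=\frac{z}{|z|}-\kappa\frac{P_0-z}{|P_0-z|}$ the normal to $\Gamma(P_0,b_0)$ at $z$.
   Context: $D\subset\mathbb R^n$ is contained in an $(n-1)$-dimensional hypersurface, with $\bar D$ compact and $0\notin\bar D$. For $P\ne0$ and $\kappa|P|<b<|P|$: $h(x,P,b)=\frac{(\kappa^2x\cdot P-b)-\sqrt{(\kappa^2x\cdot P-b)^2-(\kappa^2-1)(\kappa^2|P|^2-b^2)}}{\kappa^2-1}$, $I(P,b)=\frac{b+\sqrt{(\kappa^2-1)(\kappa^2|P|^2-b^2)}}{\kappa^2|P|}$, and the refracting oval is $\Gamma(P,b)=\{h(x,P,b)x:x\in S^{n-1},\ x\cdot P\ge I(P,b)|P|\}$; its points $z$ satisfy $|z|+\kappa|z-P|=b$. *)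

(* Defs.v *)
From HB Require Import structures.
From mathcomp Require Import all_boot all_order all_algebra.
From mathcomp Require Import all_classical all_reals all_analysis.
Set Implicit Arguments. Unset Strict Implicit. Unset Printing Implicit Defensive.
Import Order.TTheory GRing.Theory Num.Theory.
Import numFieldNormedType.Exports.
Local Open Scope ring_scope.
Local Open Scope classical_set_scope.

Definition dotp {R : realType} {n : nat} (x y : 'rV[R]_n) : R :=
  \sum_(i < n) x ord0 i * y ord0 i.

Definition enorm {R : realType} {n : nat} (x : 'rV[R]_n) : R :=
  Num.sqrt (dotp x x).

Definition hfun {R : realType} {n : nat} (kappa : R) (x P : 'rV[R]_n) (b : R) : R :=
  let c := kappa ^+ 2 * dotp x P - b in
  (c - Num.sqrt (c ^+ 2 - (kappa ^+ 2 - 1) * (kappa ^+ 2 * enorm P ^+ 2 - b ^+ 2)))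
  / (kappa ^+ 2 - 1).

Definition Ifun {R : realType} {n : nat} (kappa : R) (P : 'rV[R]_n) (b : R) : R :=
  (b + Num.sqrt ((kappa ^+ 2 - 1) * (kappa ^+ 2 * enorm P ^+ 2 - b ^+ 2)))
  / (kappa ^+ 2 * enorm P).

Definition Gamma {R : realType} {n : nat} (kappa : R) (P : 'rV[R]_n) (b : R)
  : set 'rV[R]_n :=
  [set z | exists x : 'rV[R]_n, enorm x = 1 /\
     Ifun kappa P b * enorm P <= dotp x P /\ z = hfun kappa x P b *: x].

Definition onormal {R : realType} {n : nat} (kappa : R) (P z : 'rV[R]_n) : 'rV[R]_n :=
  (enorm z)^-1 *: z - kappa *: ((enorm (P - z))^-1 *: (P - z)).

(* Main.v *)
From HB Require Import structures.
From mathcomp Require Import all_boot all_order all_algebra.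
From mathcomp Require Import all_classical all_reals all_analysis.
From mathcomp Require Import ring lra.
Import Order.TTheory GRing.Theory Num.Theory.
Import numFieldNormedType.Exports.
Local Open Scope ring_scope.
Local Open Scope classical_set_scope.
Require Import Defs.
Set Implicit Arguments. Unset Strict Implicit.
Section A.
Variable R : realType.
Variable n : nat.
Implicit Types x y z P : 'rV[R]_n.
Implicit Types u v : nat -> 'rV[R]_n.
Lemma cvg_entry u (M : 'rV[R]_n) i : u @ \oo --> M -> (fun k => u k ord0 i) @ \oo --> M ord0 i.
Proof.
move=> /cvgrPdist_lt H; apply/cvgrPdist_lt => e e0.
apply: filterS (H e e0) => k /= Hk; apply: le_lt_trans Hk.
have -> : M ord0 i - u k ord0 i = (M - u k) ord0 i by rewrite !mxE.
have -> : `|M - u k| = mx_norm (M - u k) by [].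
rewrite mx_normrE.
exact: (le_bigmax_cond _ (j:=(ord0,i))).
Qed.

Lemma cvg_bigsum (T : eqType) (r : seq T) (f : nat -> T -> R) g :
  (forall i, f ^~ i @ \oo --> g i) ->
  (fun k => \sum_(i <- r) f k i) @ \oo --> \sum_(i <- r) g i.
Proof.
move=> H; elim: r => [|a r IH].
  rewrite big_nil; under eq_fun do rewrite big_nil; exact: cvg_cst.
rewrite big_cons; under eq_fun do rewrite big_cons.
exact: cvgD.
Qed.

Lemma cvg_dotp u v (a b : 'rV[R]_n) : u @ \oo --> a -> v @ \oo --> b ->
  (fun k => dotp (u k) (v k)) @ \oo --> dotp a b.
Proof.
move=> Hu Hv; rewrite /dotp; apply: cvg_bigsum => i.
apply: cvgM; exact: cvg_entry.
Qed.

Lemma cvg_sqrt (f : nat -> R) a : f @ \oo --> a -> (fun k => Num.sqrt (f k)) @ \oo --> Num.sqrt a.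
Proof. move=> H; exact: continuous_cvg (@sqrt_continuous R a) H. Qed.

Lemma cvg_enorm u (a : 'rV[R]_n) : u @ \oo --> a -> (fun k => enorm (u k)) @ \oo --> enorm a.
Proof. move=> H; rewrite /enorm; apply: cvg_sqrt; exact: cvg_dotp. Qed.
Lemma dotpC x y : dotp x y = dotp y x.
Proof. by rewrite /dotp; apply: eq_bigr => i _; rewrite mulrC. Qed.
Lemma dotpDl x y z : dotp (x + y) z = dotp x z + dotp y z.
Proof. by rewrite /dotp -big_split; apply: eq_bigr => i _; rewrite mxE mulrDl. Qed.
Lemma dotpNl x z : dotp (- x) z = - dotp x z.
Proof. by rewrite /dotp -sumrN; apply: eq_bigr => i _; rewrite mxE mulNr. Qed.
Lemma dotpZl (a : R) x z : dotp (a *: x) z = a * dotp x z.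
Proof. by rewrite /dotp mulr_sumr; apply: eq_bigr => i _; rewrite mxE mulrA. Qed.
Lemma dotp_ge0 x : 0 <= dotp x x.
Proof. by rewrite /dotp; apply: sumr_ge0 => i _; rewrite -expr2 sqr_ge0. Qed.
Lemma enorm_sq x : enorm x ^+ 2 = dotp x x.
Proof. by rewrite /enorm sqr_sqrtr // dotp_ge0. Qed.
Lemma enorm_ge0 x : 0 <= enorm x.
Proof. exact: sqrtr_ge0. Qed.
Lemma enormZ (a : R) x : enorm (a *: x) = `|a| * enorm x.
Proof.
rewrite /enorm dotpZl dotpC dotpZl mulrA -expr2 sqrtrM ?sqr_ge0 //.
by rewrite sqrtr_sqr.
Qed.
Lemma dotp_expand (a : R) x P :
  dotp (a *: x - P) (a *: x - P) = a ^+ 2 * dotp x x - 2 * a * dotp x P + dotp P P.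
Proof.
rewrite dotpDl dotpNl !(dotpC _ (a *: x - P)) !dotpDl !dotpNl !dotpZl (dotpC x (a *: x)) (dotpC P (a *: x)) !dotpZl.
ring.
Qed.

Lemma hfun_facts (k : R) x P b : k < -1 -> k * enorm P < b < enorm P ->
  enorm x = 1 -> Ifun k P b * enorm P <= dotp x P ->
  0 < hfun k x P b /\
  k ^+ 2 * dotp (hfun k x P b *: x - P) (hfun k x P b *: x - P) = (hfun k x P b - b) ^+ 2.
Proof.
move=> hk /andP[h1 h2] hx hI.
have dxx : dotp x x = 1 by rewrite -enorm_sq hx expr1n.
have dPP : dotp P P = enorm P ^+ 2 by rewrite enorm_sq.
rewrite dotp_expand dxx dPP.
move: hI; rewrite /hfun /Ifun /=.
move: h1 h2 (enorm_ge0 P); set p := enorm P; set t := dotp x P => h1 h2 p0 hI.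
have pp : 0 < p.
  rewrite lt_def p0 andbT; apply/eqP => e; rewrite e mulr0 in h1; rewrite e in h2; lra.
have A0 : 0 < k ^+ 2 - 1 by nra.
have K0 : 0 < k ^+ 2 * p ^+ 2 - b ^+ 2.
  have e1 : 0 < b - k * p by lra.
  have e2 : b + k * p < 0 by nra.
  nra.
set S := Num.sqrt _ in hI.
have S0 : 0 < S by rewrite sqrtr_gt0 mulr_gt0.
have SS : S ^+ 2 = (k ^+ 2 - 1) * (k ^+ 2 * p ^+ 2 - b ^+ 2) by rewrite sqr_sqrtr // ltW // mulr_gt0.
have k2 : 0 < k ^+ 2 by nra.
have hc : S <= k ^+ 2 * t - b.
  move: hI; have -> : (b + S) / (k ^+ 2 * p) * p = (b + S) / k ^+ 2.
    field; apply/andP; split; apply/eqP => e; [rewrite e in hk|rewrite e in pp]; lra.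
  rewrite ler_pdivrMr // => hI'; lra.
set c := k ^+ 2 * t - b in hc *.
rewrite -SS.
set d := Num.sqrt _.
have D0 : 0 <= c ^+ 2 - S ^+ 2 by nra.
have dd : d ^+ 2 = c ^+ 2 - S ^+ 2 by rewrite sqr_sqrtr.
have d0 : 0 <= d := sqrtr_ge0 _.
have dc : d < c by nra.
split; first by rewrite divr_gt0 // subr_gt0.
set h := (c - d) / _.
have hA : d = c - h * (k ^+ 2 - 1) by rewrite /h divfK ?gt_eqF //; ring.
rewrite hA SS in dd.
apply: (@mulfI _ (k ^+ 2 - 1)); first by rewrite gt_eqF.
rewrite /=.
apply/eqP; rewrite -subr_eq0; apply/eqP.
transitivity ((c - h * (k ^+ 2 - 1)) ^+ 2 - (c ^+ 2 - (k ^+ 2 - 1) * (k ^+ 2 * p ^+ 2 - b ^+ 2))).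
  rewrite /c; ring.
by rewrite dd subrr.
Qed.
Lemma dotp0 : dotp (0 : 'rV[R]_n) 0 = 0.
Proof. by rewrite /dotp big1 // => i _; rewrite mxE mul0r. Qed.
Lemma dotpNN x : dotp (- x) (- x) = dotp x x.
Proof. by rewrite dotpNl dotpC dotpNl opprK. Qed.

Lemma enorm_eq0 x : enorm x = 0 -> x = 0.
Proof.
move=> e; have : dotp x x = 0 by rewrite -enorm_sq e expr0n.
rewrite /dotp => /psumr_eq0P H.
have {}H : forall i, x ord0 i * x ord0 i = 0.
  by move=> i; apply: H => // j _; rewrite -expr2 sqr_ge0.
apply/rowP => i; rewrite mxE; have -> : (0 : 'I_1) = ord0 by apply: val_inj.
by have /eqP := H i; rewrite -expr2 sqrf_eq0 => /eqP.
Qed.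

Lemma lim_uniq (f : nat -> R) (a b : R) : f @ \oo --> a -> f @ \oo --> b -> a = b.
Proof. by move=> Ha Hb; apply: (norm_cvg_unique Ha Hb). Qed.

Lemma cvg_inv (f : nat -> R) (a : R) : a != 0 -> f @ \oo --> a -> (fun k => (f k)^-1) @ \oo --> a^-1.
Proof. by move=> a0 H; apply: (cvgV a0 H). Qed.

Lemma cvg_sq (f : nat -> R) (a : R) : f @ \oo --> a -> (fun k => f k ^+ 2) @ \oo --> a ^+ 2.
Proof. by move=> H; under eq_fun do rewrite expr2; rewrite expr2; apply: cvgM. Qed.

Lemma Kpos (k : R) p b : k < -1 -> k * p < b < p -> 0 <= p -> 0 < p /\ b ^+ 2 < k ^+ 2 * p ^+ 2.
Proof.
move=> hk /andP[h1 h2] p0.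
have pp : 0 < p.
  rewrite lt_def p0 andbT; apply/eqP => e; rewrite e mulr0 in h1; rewrite e in h2; lra.
split => //.
have e1 : 0 < b - k * p by lra.
have e2 : b + k * p < 0 by nra.
nra.
Qed.
End A.
Unset Implicit Arguments.

Theorem lemma3p7 (R : realType) (n : nat) (D : set 'rV[R]_n) (kappa : R)
  (P_ : nat -> 'rV[R]_n) (P0 : 'rV[R]_n) (b_ : nat -> R) (b0 : R)
  (z_ : nat -> 'rV[R]_n) (z0 : 'rV[R]_n) :
  compact (closure D) -> ~ closure D 0 ->
  kappa < -1 ->
  (forall k, closure D (P_ k)) -> closure D P0 ->
  (forall k, kappa * enorm (P_ k) < b_ k < enorm (P_ k)) ->
  kappa * enorm P0 < b0 < enorm P0 ->
  P_ @ \oo --> P0 -> b_ @ \oo --> b0 ->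
  (forall k, Gamma kappa (P_ k) (b_ k) (z_ k)) ->
  z_ @ \oo --> z0 ->
  Gamma kappa P0 b0 z0 /\
  (fun k => onormal kappa (P_ k) (z_ k)) @ \oo --> onormal kappa P0 z0.
Proof.
move=> _ _ hk _ _ hPb hb0 cP cb hG cz.
have [x_ hx] := boolp.choice hG.
pose h k := hfun kappa (x_ k) (P_ k) (b_ k).
have Hk k : 0 < h k /\ z_ k = h k *: x_ k /\ enorm (x_ k) = 1 /\
    Ifun kappa (P_ k) (b_ k) * enorm (P_ k) <= dotp (x_ k) (P_ k) /\
    kappa ^+ 2 * dotp (z_ k - P_ k) (z_ k - P_ k) = (h k - b_ k) ^+ 2.
  have [e1 [e2 e3]] := hx k.
  have [f1 f2] := hfun_facts hk (hPb k) e1 e2.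
  by rewrite e3.
have ez k : enorm (z_ k) = h k.
  have [h0 [-> [e1 _]]] := Hk k.
  by rewrite enormZ e1 mulr1 gtr0_norm.
have ovk k : kappa ^+ 2 * dotp (z_ k - P_ k) (z_ k - P_ k) = (enorm (z_ k) - b_ k) ^+ 2.
  by rewrite ez; have [_ [_ [_ [_ ->]]]] := Hk k.
have czP : (fun k => z_ k - P_ k) @ \oo --> z0 - P0 by apply: cvgB.
have ov0 : kappa ^+ 2 * dotp (z0 - P0) (z0 - P0) = (enorm z0 - b0) ^+ 2.
  apply: (@lim_uniq _ (fun k => kappa ^+ 2 * dotp (z_ k - P_ k) (z_ k - P_ k))).
    by apply: cvgM; [exact: cvg_cst| apply: cvg_dotp].
  under eq_fun do rewrite ovk.
  by apply: cvg_sq; apply: cvgB => //; apply: cvg_enorm.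
have [pp Kp] := Kpos hk hb0 (enorm_ge0 P0).
have z0n : enorm z0 != 0.
  apply/eqP => e; move: ov0; rewrite e (enorm_eq0 e) sub0r dotpNN -enorm_sq.
  move: Kp; set p := enorm P0 => Kp; nra.
have zP : enorm (P0 - z0) != 0.
  apply/eqP => /enorm_eq0 /eqP; rewrite subr_eq0 => /eqP PZ.
  move: ov0 hb0; rewrite -PZ subrr dotp0 mulr0 => ov0 /andP[_ hb]; nra.
pose x0 := (enorm z0)^-1 *: z0.
have xk k : x_ k = (enorm (z_ k))^-1 *: z_ k.
  have [h0 [e _]] := Hk k.
  by rewrite {2}e scalerA ez mulVf ?scale1r // gt_eqF.
have cx : x_ @ \oo --> x0.
  have -> : x_ = (fun k => (enorm (z_ k))^-1 *: z_ k) by apply: funext.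
  by apply: cvgZ => //; apply: cvg_inv => //; apply: cvg_enorm.
have ex0 : enorm x0 = 1.
  by rewrite enormZ ger0_norm ?invr_ge0 ?enorm_ge0 // mulVf.
have cPn : (fun k => enorm (P_ k)) @ \oo --> enorm P0 by apply: cvg_enorm.
have cI : (fun k => Ifun kappa (P_ k) (b_ k)) @ \oo --> Ifun kappa P0 b0.
  rewrite /Ifun; apply: cvgM.
    apply: cvgD => //; apply: cvg_sqrt; apply: cvgM; first exact: cvg_cst.
    by apply: cvgB; [apply: cvgM; [exact: cvg_cst| exact: cvg_sq] | exact: cvg_sq].
  apply: cvg_inv.
    rewrite mulf_neq0 //; last by rewrite gt_eqF.
    by rewrite expf_neq0 //; apply/eqP => e; rewrite e in hk; lra.
  by apply: cvgM; [exact: cvg_cst|].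
have cI0 : Ifun kappa P0 b0 * enorm P0 <= dotp x0 P0.
  have H : (fun k => dotp (x_ k) (P_ k) - Ifun kappa (P_ k) (b_ k) * enorm (P_ k)) @ \oo
     --> dotp x0 P0 - Ifun kappa P0 b0 * enorm P0.
    by apply: cvgB; [apply: cvg_dotp | apply: cvgM].
  rewrite -subr_ge0.
  have C := closed_cvg (F := \oo) (u_ := fun k => dotp (x_ k) (P_ k) - Ifun kappa (P_ k) (b_ k) * enorm (P_ k)) [set x : R | 0 <= x] (@closed_ge R 0).
  move: C; rewrite /=; apply; last exact: H.
  apply: nearW => k /=; rewrite subr_ge0.
  by have [_ [_ [_ [-> _]]]] := Hk k.
have ch : h @ \oo --> hfun kappa x0 P0 b0.
  rewrite /h /hfun /=; apply: cvgM; last exact: cvg_cst.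
  have cc : (fun k => kappa ^+ 2 * dotp (x_ k) (P_ k) - b_ k) @ \oo -->
      kappa ^+ 2 * dotp x0 P0 - b0.
    by apply: cvgB => //; apply: cvgM; [exact: cvg_cst| apply: cvg_dotp].
  apply: cvgB => //; apply: cvg_sqrt; apply: cvgB; first exact: cvg_sq.
  apply: cvgM; first exact: cvg_cst.
  by apply: cvgB; [apply: cvgM; [exact: cvg_cst| exact: cvg_sq] | exact: cvg_sq].
have ezh : enorm z0 = hfun kappa x0 P0 b0.
  apply: (@lim_uniq _ h) => //.
  have -> : h = (fun k => enorm (z_ k)) by apply: funext => k; rewrite ez.
  exact: cvg_enorm.
split.
  exists x0; split => //; split => //.
  by rewrite -ezh /x0 scalerA mulfV // scale1r.
rewrite /onormal; apply: cvgB.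
  by apply: cvgZ => //; apply: cvg_inv => //; apply: cvg_enorm.
apply: cvgZ; first exact: cvg_cst.
have cPz : (fun k => P_ k - z_ k) @ \oo --> P0 - z0 by apply: cvgB.
by apply: cvgZ => //; apply: cvg_inv => //; apply: cvg_enorm.
Qed.
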